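(* Let $P$ be an affine property of finite sets of integers. For each positive integer $n$, let $S(n;P) \subseteq \{1,2,\dots,n\}$ be a subset of largest possible cardinality among the subsets of $\{1,\dots,n\}$ having property $P$, let $f(n;P) = |S(n;P)|$, and let $C_P(n) = f(n;P)/n$. Then $$\sum_{a \in S(n;P)} z^a = C_P(n) \sum_{k=1}^{n} z^k + o(n)$$ as $n \to \infty$, uniformly on $|z| = 1$; that is, $\sup_{|z|=1} \left| \sum_{a \in S(n;P)} z^a - C_P(n) \sum_{k=1}^{n} z^k \right| = o(n)$.
   Context: A property $P$ of finite sets of integers is called affine if (C1) for each fixed pair of integers $\alpha \neq 0$ and $\beta$, a set $\{a_n\}$ has $P$ if and only if $\{\alpha a_n + \beta\}$ has $P$; and (C2) if a set has $P$, then all of its subsets have $P$. Examples: the trivial property of just being a set, or the property of not containing any arithmetic progression of three distinct terms. *)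

(* Defs.v *)
From HB Require Import structures.
From mathcomp Require Import all_boot all_order all_algebra.
From mathcomp Require Import finmap.
From mathcomp Require Import complex.
From mathcomp Require Import reals.
Set Implicit Arguments. Unset Strict Implicit. Unset Printing Implicit Defensive.
Import Order.TTheory GRing.Theory Num.Theory.
Local Open Scope ring_scope.
Local Open Scope fset_scope.

Definition int_set_property := {fset int} -> Prop.

(* (C1) invariance under nondegenerate affine maps x |-> alpha x + beta,
   (C2) heredity under subsets. *)
Definition affine_property (P : int_set_property) : Prop :=
  (forall (alpha beta : int), alpha != 0 ->
     forall A : {fset int}, P A <-> P [fset (alpha * x + beta)%R | x in A])
  /\ (forall A B : {fset int}, fsubset B A -> P A -> P B).

Definition in_range (n : nat) (A : {fset int}) : Prop :=
  forall a, a \in A -> (1 <= a) && (a <= n%:Z).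

Definition is_max_P (P : int_set_property) (n : nat) (S : {fset int}) : Prop :=
  [/\ in_range n S, P S &
      forall T : {fset int}, in_range n T -> P T -> (#|` T| <= #|` S|)%N].

(* Main.v *)
Require Import Defs.
From HB Require Import structures.
From mathcomp Require Import all_boot all_order all_algebra.
From mathcomp Require Import finmap.
From mathcomp Require Import complex.
From mathcomp Require Import reals.
From mathcomp Require Import zify ring lra.
From Stdlib Require Import Classical_Prop Classical_Pred_Type.
Import Order.TTheory GRing.Theory Num.Theory.
Local Open Scope ring_scope.
Local Open Scope fset_scope.
Local Open Scope ring_scope.
Lemma sum_mul_split (V : nmodType) (F : nat -> V) (a b : nat) :
  \sum_(0 <= t < a * b) F t = \sum_(0 <= x < a) \sum_(0 <= y < b) F (x * b + y)%N.
Proof.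
elim: a => [|a IH]; first by rewrite mul0n !big_geq.
rewrite big_nat_recr //= -IH mulSn addnC.
rewrite (big_cat_nat _ (leq_addr (b) (a*b))) //=.
apply: f_equal2 => //.
rewrite -{1}(add0n (a*b)%N) big_addn addKn.
by apply: eq_bigr => i _; rewrite addnC.
Qed.

Lemma sum_dec (V : nmodType) (F : nat -> V) (n q m B : nat) :
  (B * (q * m) <= n)%N ->
  \sum_(0 <= t < n) F t =
  (\sum_(0 <= b < B) \sum_(0 <= j < q) \sum_(0 <= i < m) F (b * (q * m) + (i * q + j))%N
  + \sum_(B * (q * m) <= t < n) F t)%R.
Proof.
move=> hB.
rewrite (big_cat_nat (leq0n (B * (q * m))) hB) /= sum_mul_split.
apply: f_equal2 => //; apply: eq_bigr => b _.
rewrite mulnC sum_mul_split exchange_big /=.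
done.
Qed.
Lemma sum_fset_range (V : nmodType) (A : {fset int}) (n : nat) (G : int -> V) :
  in_range n A ->
  \sum_(a <- A) G a =
  \sum_(0 <= t < n) (if Posz t.+1 \in A then G (Posz t.+1) else 0).
Proof.
move=> hA.
rewrite -(big_map (fun t => Posz t.+1) xpredT (fun x => if x \in A then G x else 0)).
rewrite -big_mkcond /= -[RHS]big_filter.
apply: perm_big; apply: uniq_perm.
- exact: fset_uniq.
- apply: filter_uniq; rewrite map_inj_uniq ?iota_uniq //.
  by move=> x y [].
move=> x; rewrite mem_filter.
case xA: (x \in A) => //=.
have /andP[h1 h2] := hA x xA.
apply/esym/mapP.
exists (`|x|%N.-1); first by rewrite mem_index_iota; lia.
lia.
Qed.
Lemma ap_count (P : {fset int} -> Prop) (hP : affine_property P)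
  (S : nat -> {fset int}) (hS : forall n : nat, (0 < n)%N -> is_max_P P n (S n))
  (A : {fset int}) (PA : P A) (a0 q m : nat) :
  (0 < q)%N -> (0 < m)%N ->
  (\sum_(0 <= i < m) ((Posz (a0 + i * q).+1 \in A) : nat) <= #|` S m|)%N.
Proof.
move=> q0 m0.
pose beta : int := Posz a0.+1 - Posz q.
pose s := [seq x <- map (fun i => Posz i.+1) (index_iota 0 m) | (Posz q * x + beta)%R \in A].
pose U := [fset x in s].
have us : uniq s.
  apply: filter_uniq; rewrite map_inj_uniq ?iota_uniq //.
  by move=> x y [].
have cardU : #|` U| = (\sum_(0 <= i < m) ((Posz (a0 + i * q).+1 \in A) : nat))%N.
  rewrite card_fseq undup_id // size_filter count_map.
  rewrite -sum1_count big_mkcond /=.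
  apply: eq_bigr => i _.
  have -> : (Posz q * Posz i.+1 + beta)%R = Posz (a0 + i * q).+1 by rewrite /beta; lia.
  by case: (_ \in A).
rewrite -cardU.
have [_ _ H] := hS m m0.
apply: H.
- move=> x; rewrite /U inE /s mem_filter => /andP[_ hx].
  have [i hi ->] := mapP hx.
  move: hi; rewrite mem_index_iota => hi; lia.
- have q0' : (Posz q != 0) by rewrite eqz_nat -lt0n.
  apply/(hP.1 (Posz q) beta q0' U).
  apply: (hP.2 A) => //.
  apply/fsubsetP => y /imfsetP [x /= xU ->].
  by move: xU; rewrite /U inE /s mem_filter => /andP[].
Qed.
Lemma choose_m (R : realType) (f : nat -> nat)
  (hf : forall k, (0 < k)%N -> (f k <= k)%N) (e : R) : 0 < e ->
  exists m, (0 < m)%N /\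
    forall k, (0 < k)%N -> (f m)%:R / m%:R - e <= (f k)%:R / k%:R :> R.
Proof.
move=> e0; apply: NNPP => H.
have H' : forall m, (0 < m)%N -> exists k, (0 < k)%N /\
    (f k)%:R / k%:R < (f m)%:R / m%:R - e :> R.
  move=> m m0; apply: NNPP => Hn; apply: H; exists m; split => // k k0.
  rewrite leNgt; apply/negP => hlt; apply: Hn; exists k; split => //.
have claim : forall j : nat, exists m, (0 < m)%N /\
    (f m)%:R / m%:R <= 1 - j%:R * e :> R.
  elim=> [|j [m [m0 hm]]].
    exists 1%N; split => //; rewrite mul0r subr0 divr1 -[X in _ <= X](mulr1n 1) ler_nat.
    exact: hf.
  have [k [k0 hk]] := H' m m0.
  exists k; split => //.
  rewrite -natr1 mulrDl mul1r. move: hk hm; set J := j%:R * e; set a := _ / _; set b := _ / _; lra.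
have [m [m0 hm]] := claim (Num.truncn (e^-1)).+1.
have h1 := truncnS_gt (e^-1).
have h2 : 1 < (Num.truncn e^-1).+1%:R * e.
  by rewrite -[X in X < _](mulVf (lt0r_neq0 e0)) ltr_pM2r.
have h3 : 0 <= (f m)%:R / m%:R :> R by rewrite divr_ge0.
lra.
Qed.
Lemma norm_le_ReIm (R : realType) (w : R[i]) :
  `|w| <= ((`|complex.Re w| + `|complex.Im w|)%:C)%C.
Proof.
rewrite normc_def lecR.
have h0 : 0 <= `|complex.Re w| + `|complex.Im w| by rewrite addr_ge0.
rewrite -(ger0_norm h0) -sqrtr_sqr.
rewrite ler_sqrt; last by rewrite sqr_ge0.
rewrite -[complex.Re w ^+ 2]real_normK ?num_real // -[complex.Im w ^+ 2]real_normK ?num_real //.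
set a := `|_|; set b := `|_|.
have : 0 <= a * b by apply: mulr_ge0; apply: normr_ge0.
rewrite sqrrD; lra.
Qed.

Lemma unit_ReIm (R : realType) (w : R[i]) : `|w| = 1 ->
  -1 <= complex.Re w <= 1 /\ -1 <= complex.Im w <= 1.
Proof.
move=> hw.
have : ((complex.Re w)^+2 + (complex.Im w)^+2)%:C%C = 1 :> R[i].
  by rewrite add_Re2_Im2 hw expr1n.
move/complexI => h.
have h1 : 0 <= complex.Re w ^+ 2 by apply: sqr_ge0.
have h2 : 0 <= complex.Im w ^+ 2 by apply: sqr_ge0.
split; apply/andP; split; nra.
Qed.
Lemma cell_close (R : realType) (K : nat) (x y : R) : (0 < K)%N ->
  -1 <= x -> -1 <= y ->
  Num.truncn ((x + 1) * K%:R / 2) = Num.truncn ((y + 1) * K%:R / 2) ->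
  `|x - y| < 2 / K%:R.
Proof.
move=> K0 hx hy ht.
have k0 : 0 < K%:R :> R by rewrite ltr0n.
have ha : 0 <= (x + 1) * K%:R / 2 by rewrite divr_ge0 // mulr_ge0 // ?subr_ge0; lra.
have hb : 0 <= (y + 1) * K%:R / 2 by rewrite divr_ge0 // mulr_ge0 // ?subr_ge0; lra.
have /andP[a1 a2] := truncn_itv ha.
have /andP[b1 b2] := truncn_itv hb.
rewrite ht in a1 a2.
move: a1 a2 b1 b2; set t := (Num.truncn _)%:R; set t1 := (Num.truncn _).+1%:R.
have -> : t1 = t + 1 by rewrite /t1 /t -natr1.
set k := K%:R in k0 *.
have hc : 2 / k * k = 2 by rewrite divfK // lt0r_neq0.
move: hc; set c := 2 / k => hc.
rewrite ltr_norml => a1 a2 b1 b2.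
apply/andP; split; nra.
Qed.
Lemma dirichlet (R : realType) (K : nat) (z : R[i]) : (0 < K)%N -> `|z| = 1 ->
  exists q, [/\ (0 < q)%N, (q <= K.+1 ^ 2)%N & `|z ^+ q - 1| <= ((4 / K%:R)%:C)%C].
Proof.
move=> K0 hz.
pose tr (x : R) := Num.truncn ((x + 1) * K%:R / 2).
pose cell (x : R) : 'I_K.+1 := inord (tr x).
pose c (i : 'I_(K.+1 ^ 2).+1) := (cell (complex.Re (z ^+ i)), cell (complex.Im (z ^+ i))).
have ninj : ~ injective c.
  move=> inj; have := leq_card c inj; rewrite card_prod !card_ord; lia.
have [i [j [hij hne]]] : exists i j, c i = c j /\ i <> j.
  apply: NNPP => H; apply: ninj => i j hij; apply: NNPP => hne; apply: H.
  by exists i, j.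
have hw : forall k : nat, `|z ^+ k| = 1 by move=> k; rewrite normrX hz expr1n.
have trK : forall x : R, -1 <= x <= 1 -> (tr x <= K)%N.
  move=> x /andP[h1 h2]; rewrite /tr truncn_le_nat.
  have k0 : 0 <= K%:R :> R by [].
  have : (x + 1) * K%:R / 2 <= K%:R.
    rewrite ler_pdivrMr // mulrC ler_pM2l; last first.
    move: k0; rewrite le0r => /orP[/eqP k0'|//].
    by move: K0; rewrite -(ltr0n R) k0' ltxx.
    lra.
  by move=> h; apply: (le_lt_trans h); rewrite ltr_nat.
have cellE : forall x y : R, -1 <= x <= 1 -> -1 <= y <= 1 -> cell x = cell y -> tr x = tr y.
  move=> x y hx hy /(congr1 val); rewrite /cell /= !inordK // ltnS; exact: trK.
have key : forall a b : nat, c (inord a) = c (inord b) -> (a <= (K.+1^2))%N -> (b <= (K.+1^2))%N ->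
    `|z ^+ a - z ^+ b| <= ((4 / K%:R)%:C)%C.
  move=> a b hab ha hb.
  move: hab; rewrite /c !inordK ?ltnS // => -[].
  have [ra ia] := @unit_ReIm _ _ (hw a).
  have [rb ib] := @unit_ReIm _ _ (hw b).
  move=> /(cellE _ _ ra rb) e1 /(cellE _ _ ia ib) e2.
  have d1 := @cell_close _ _ _ _ K0 (proj1 (andP ra)) (proj1 (andP rb)) e1.
  have d2 := @cell_close _ _ _ _ K0 (proj1 (andP ia)) (proj1 (andP ib)) e2.
  apply: le_trans (norm_le_ReIm _ _) _.
  rewrite lecR.
  have -> : complex.Re (z ^+ a - z ^+ b) = complex.Re (z ^+ a) - complex.Re (z ^+ b).
    by case: (z ^+ a) => ? ?; case: (z ^+ b).
  have -> : complex.Im (z ^+ a - z ^+ b) = complex.Im (z ^+ a) - complex.Im (z ^+ b).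
    by case: (z ^+ a) => ? ?; case: (z ^+ b).
  have -> : 4 / K%:R = 2 / K%:R + 2 / K%:R :> R by rewrite -mulrDl; congr (_ / _); rewrite -natrD.
  exact: ltW (ltrD d1 d2).
wlog lt: i j hij hne / (i < j)%N.
  move=> hwl; case: (ltngtP i j) => h.
  - exact: hwl hij hne h.
  - exact: hwl (esym hij) (fun e => hne (esym e)) h.
  - by exfalso; apply: hne; apply: val_inj.
exists (j - i)%N; split.
- by rewrite subn_gt0.
- have := ltn_ord j; rewrite ltnS => hj; exact: leq_trans (leq_subr _ _) hj.
have hjle : (j <= K.+1 ^ 2)%N by rewrite -ltnS.
have hile : (i <= K.+1 ^ 2)%N by rewrite -ltnS.
have := key j i; rewrite !inord_val => /(_ (esym hij) hjle hile).
have -> : z ^+ j = z ^+ i * z ^+ (j - i) by rewrite -exprD subnKC // ltnW.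
by rewrite -{2}(mulr1 (z ^+ i)) -mulrBr normrM hw mul1r.
Qed.
Lemma normC_real (R : realType) (x : R) : `|(x%:C)%C| = ((`|x|)%:C)%C.
Proof.
rewrite normc_def /=; congr (_%:C)%C.
by rewrite expr0n /= addr0 sqrtr_sqr.
Qed.

Lemma pow_close (R : realType) (zeta : R[i]) (i : nat) : `|zeta| = 1 ->
  `|zeta ^+ i - 1| <= i%:R * `|zeta - 1|.
Proof.
move=> hz; elim: i => [|i IH]; first by rewrite expr0 subrr normr0 mul0r.
have -> : zeta ^+ i.+1 - 1 = zeta * (zeta ^+ i - 1) + (zeta - 1).
  by rewrite exprS; ring.
apply: le_trans (ler_normD _ _) _.
rewrite normrM hz mul1r -natr1 mulrDl mul1r.
exact: lerD IH (lexx _).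
Qed.

Lemma block_bound (R : realType) (m : nat) (d : nat -> R) (wb zeta : R[i]) (del : R) :
  (forall i, `|d i| <= 1) -> `|wb| = 1 -> `|zeta| = 1 -> `|zeta - 1| <= (del%:C)%C ->
  `|\sum_(0 <= i < m) ((d i)%:C)%C * (wb * zeta ^+ i)|
     <= ((`|\sum_(0 <= i < m) d i| + m%:R * m%:R * del)%:C)%C.
Proof.
move=> hd hw hz hdel.
have e : \sum_(0 <= i < m) ((d i)%:C)%C * (wb * zeta ^+ i) =
   ((\sum_(0 <= i < m) d i)%:C)%C * wb + \sum_(0 <= i < m) ((d i)%:C)%C * wb * (zeta ^+ i - 1).
  rewrite rmorph_sum mulr_suml -big_split /=; apply: eq_bigr => i _; ring.
rewrite e rmorphD /=; apply: le_trans (ler_normD _ _) _.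
apply: lerD; first by rewrite normrM hw mulr1 normC_real.
apply: le_trans (ler_norm_sum _ _ _) _.
have hdel0 : 0 <= del.
  by rewrite -ler0c; apply: le_trans hdel.
apply: (@le_trans _ _ (\sum_(0 <= i < m) ((m%:R * del)%:C)%C)).
  rewrite big_nat [X in _ <= X]big_nat; apply: ler_sum => i /andP[_ hi].
  rewrite !normrM hw mulr1 normC_real.
  have h0 : 0 <= ((`|d i|)%:C)%C :> R[i] by rewrite ler0c.
  apply: le_trans (ler_wpM2l h0 (@pow_close _ _ i hz)) _.
  apply: (@le_trans _ _ (i%:R * `|zeta - 1|)).
    rewrite -[X in _ <= X]mul1r; apply: ler_wpM2r.
      by rewrite mulr_ge0.
    by rewrite -(rmorph1 (real_complex R)) lecR hd.
  apply: le_trans (ler_wpM2l (ler0n _ _) hdel) _.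
  rewrite -(rmorph_nat (real_complex R)) -rmorphM lecR; apply: ler_wpM2r => //.
  by rewrite ler_nat ltnW.
rewrite sumr_const_nat subn0 -rmorphMn /=.
by rewrite lecR -mulr_natl mulrA.
Qed.
Lemma arith1 (a i q j : nat) : (a + (i * q + j)).+1 = ((a + j).+1 + q * i)%N.
Proof. lia. Qed.
Lemma arith2 (a i q j : nat) : (a + (i * q + j))%N = (a + j + i * q)%N.
Proof. lia. Qed.
Lemma fin_arith (R : realType) (eps fn S1 S2 r a1 a2 a3 nR : R) :
  fn = S1 + S2 -> S2 <= r -> a1 <= fn -> a2 <= 2 * (eps / 4 * nR) ->
  a3 <= eps / 4 * nR -> 2 * r <= eps / 4 * nR ->
  a2 + a3 + a1 - S1 + r <= eps * nR.
Proof. move=> *; lra. Qed.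
Local Open Scope fset_scope.
Theorem mainTheorem2 (R : realType) (P : {fset int} -> Prop)
  (hP : affine_property P) (S : nat -> {fset int})
  (hS : forall n : nat, (0 < n)%N -> is_max_P P n (S n)) :
  forall eps : R, 0 < eps ->
  exists N : nat, forall n : nat, (0 < n)%N -> (N <= n)%N ->
  forall z : R[i], `|z| = 1 ->
    `| \sum_(a <- S n) z ^ a
       - ((#|` S n|)%:R / n%:R) * \sum_(1 <= k < n.+1) z ^+ k |
    <= ((eps * n%:R)%:C)%C.
Proof.
Local Open Scope ring_scope.
move=> eps eps0.
pose f k := #|` S k|.
have hf : forall k, (0 < k)%N -> (f k <= k)%N.
  move=> k k0; have [hr _ _] := hS k k0.
  rewrite /f card_fset_sum1 (@sum_fset_range _ _ _ (fun _ => 1%N) hr).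
  apply: (@leq_trans (\sum_(0 <= t < k) 1)%N).
    by apply: leq_sum => t _; case: ifP.
  by rewrite sum_nat_const_nat subn0 muln1.
pose e' := eps / 4.
have e'0 : 0 < e' by rewrite divr_gt0.
have [m [m0 hm]] := @choose_m R f hf e' e'0.
pose K := (Num.truncn (16 * m%:R / eps)).+1.
have K0 : (0 < K)%N by [].
have hK : 16 * m%:R / eps < K%:R := truncnS_gt _.
pose N := (Num.truncn (8 * (K.+1 ^ 2 * m)%:R / eps)).+1.
have hN : 8 * (K.+1 ^ 2 * m)%:R / eps < N%:R := truncnS_gt _.
exists N => n n0 hNn z hz.
have [q [q0 hqK hzq]] := @dirichlet R K z K0 hz.
pose L := (q * m)%N.
have L0 : (0 < L)%N by rewrite muln_gt0 q0.
pose B := (n %/ L)%N.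
have hBL : (B * (q * m) <= n)%N by apply: leq_trunc_div.
have hrem : (n - B * (q * m) < L)%N.
  have := divn_eq n L; rewrite -/B => e; rewrite {1}e addnC addnK.
  exact: ltn_pmod.
have [hrn hPn _] := hS n n0.
pose fn : R := (f n)%:R.
pose nR : R := n%:R.
pose CR := fn / nR.
have nR0 : 0 < nR by rewrite ltr0n.
have hfn : fn <= nR by rewrite ler_nat hf.
have hCR0 : 0 <= CR by rewrite divr_ge0.
have hCR1 : CR <= 1 by rewrite ler_pdivrMr // mul1r.
have hnC : CR * nR = fn by rewrite divfK // lt0r_neq0.
pose ind (t : nat) : R := (Posz t.+1 \in S n)%:R.
have hind : forall t, `|ind t - CR| <= 1.
  move=> t; rewrite /ind ler_norml; case: (_ \in _) => /=; apply/andP; split; lra.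
have hind01 : forall t, 0 <= ind t <= 1.
  by move=> t; rewrite /ind; case: (_ \in _) => /=; rewrite ?lexx ?ler01.
have eq1 : \sum_(a <- S n) z ^ a = \sum_(0 <= t < n) ((ind t)%:C)%C * z ^+ t.+1.
  rewrite (@sum_fset_range _ _ n (fun a => z ^ a) hrn).
  apply: eq_bigr => t _; rewrite /ind; case: (_ \in _) => /=.
    by rewrite rmorph1 mul1r.
  by rewrite rmorph0 mul0r.
have eq3 : (#|` S n|)%:R / n%:R = (CR%:C)%C :> R[i].
  by rewrite fmorph_div !rmorph_nat.
rewrite eq1 big_add1 /= eq3 mulr_sumr -sumrB.
have eq4 : \sum_(0 <= t < n) (((ind t)%:C)%C * z ^+ t.+1 - (CR%:C)%C * z ^+ t.+1)
    = \sum_(0 <= t < n) (((ind t - CR)%:C)%C * z ^+ t.+1).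
  by apply: eq_bigr => t _; rewrite rmorphB mulrBl.
rewrite eq4 (@sum_dec _ (fun t => ((ind t - CR)%:C)%C * z ^+ t.+1) n q m B hBL) /=.
apply: le_trans (ler_normD _ _) _.
pose del : R := 4 / K%:R.
pose D b j := \sum_(0 <= i < m) (ind (b * (q * m) + (i * q + j))%N - CR).
have hblock : forall b j,
  `|\sum_(0 <= i < m) ((ind (b * (q * m) + (i * q + j))%N - CR)%:C)%C
        * z ^+ (b * (q * m) + (i * q + j)).+1|
  <= ((`|D b j| + m%:R * m%:R * del)%:C)%C.
  move=> b j.
  have -> : \sum_(0 <= i < m) ((ind (b * (q * m) + (i * q + j))%N - CR)%:C)%C
        * z ^+ (b * (q * m) + (i * q + j)).+1 =
     \sum_(0 <= i < m) ((ind (b * (q * m) + (i * q + j))%N - CR)%:C)%C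
        * (z ^+ (b * (q * m) + j).+1 * (z ^+ q) ^+ i).
    apply: eq_bigr => i _; congr (_ * _).
    by rewrite -exprM -exprD arith1.
  apply: block_bound.
  - by move=> i; apply: hind.
  - by rewrite normrX hz expr1n.
  - by rewrite normrX hz expr1n.
  - exact: hzq.
have hmain :
  `|\sum_(0 <= b < B) \sum_(0 <= j < q) \sum_(0 <= i < m)
      ((ind (b * (q * m) + (i * q + j))%N - CR)%:C)%C
        * z ^+ (b * (q * m) + (i * q + j)).+1|
  <= ((\sum_(0 <= b < B) \sum_(0 <= j < q) (`|D b j| + m%:R * m%:R * del))%:C)%C.
  apply: le_trans (ler_norm_sum _ _ _) _; rewrite rmorph_sum; apply: ler_sum => b _.
  apply: le_trans (ler_norm_sum _ _ _) _; rewrite rmorph_sum; apply: ler_sum => j _.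
  exact: hblock.
have hrest :
  `|\sum_(B * (q * m) <= t < n) ((ind t - CR)%:C)%C * z ^+ t.+1|
  <= ((((n - B * (q * m))%N)%:R : R)%:C)%C.
  apply: le_trans (ler_norm_sum _ _ _) _.
  apply: (@le_trans _ _ (\sum_(B * (q * m) <= t < n) (1 : R[i]))).
    apply: ler_sum => t _.
    rewrite normrM normC_real normrX hz expr1n mulr1 -(rmorph1 (real_complex R)) lecR.
    exact: hind.
  by rewrite sumr_const_nat rmorph_nat.
apply: le_trans (lerD hmain hrest) _.
rewrite -rmorphD lecR.
pose G b j := \sum_(0 <= i < m) ind (b * (q * m) + (i * q + j))%N.
have hDG : forall b j, D b j = G b j - m%:R * CR.
  by move=> b j; rewrite /D sumrB sumr_const_nat subn0 mulr_natl.
have hGm : forall b j, G b j <= (f m)%:R.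
  move=> b j.
  have := @ap_count P hP S hS (S n) hPn (b * (q * m) + j)%N q m q0 m0.
  rewrite -(ler_nat R) natr_sum => h; apply: le_trans h; rewrite le_eqVlt; apply/orP; left.
  apply/eqP; apply: eq_bigr => i _; rewrite /ind.
  by rewrite arith2.
have hfm : (f m)%:R <= m%:R * (CR + e').
  have := hm n n0; rewrite -/fn -/nR -/CR => h.
  have mR0 : 0 < m%:R :> R by rewrite ltr0n.
  rewrite -ler_pdivrMl //; lra.
have hD : forall b j, D b j <= e' * m%:R.
  move=> b j; rewrite hDG; have := hGm b j; move: hfm.
  rewrite mulrDr; set u := m%:R * CR; set v := m%:R * e'; rewrite mulrC -/v. lra.
have hDabs : forall b j, `|D b j| <= 2 * (e' * m%:R) - D b j.
  move=> b j; have := hD b j; rewrite ler_norml.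
  have : 0 <= e' * m%:R by rewrite mulr_ge0 // ltW.
  set x := D b j; set y := e' * m%:R => ??; apply/andP; split; lra.
have hfn_dec : fn = \sum_(0 <= b < B) \sum_(0 <= j < q) G b j
                  + \sum_(B * (q * m) <= t < n) ind t.
  rewrite /G -(@sum_dec _ ind n q m B hBL).
  rewrite /fn /f card_fset_sum1 natr_sum.
  rewrite (@sum_fset_range _ _ n (fun _ => (1%N)%:R) hrn).
  by apply: eq_bigr => t _; rewrite /ind; case: (_ \in _).
have hri : \sum_(B * (q * m) <= t < n) ind t <= ((n - B * (q * m))%N)%:R.
  rewrite -[X in _ <= X]mulr1 -sumr_const_nat mulr1.
  by apply: ler_sum => t _; have /andP[] := hind01 t.
have mR0 : 0 < m%:R :> R by rewrite ltr0n.
have KR0 : 0 < K%:R :> R by rewrite ltr0n.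
have hmdel : m%:R * del <= e'.
  have h := hK; rewrite ltr_pdivrMr // in h.
  rewrite /del /e' mulrA ler_pdivrMr // mulrAC ler_pdivlMr //; nra.
have hBLr : (B * q)%:R * m%:R <= nR by rewrite -natrM -mulnA ler_nat.
have hA : (B * q)%:R * (m%:R * CR) <= fn.
  by rewrite mulrA -hnC [X in _ <= X]mulrC; apply: ler_wpM2r.
have hB2 : (B * q)%:R * (2 * (e' * m%:R)) <= 2 * (e' * nR).
  rewrite mulrCA; apply: ler_wpM2l; first by [].
  by rewrite mulrCA; apply: ler_wpM2l; [apply: ltW|].
have hC : (B * q)%:R * (m%:R * m%:R * del) <= e' * nR.
  rewrite -mulrA mulrA mulrC; apply: ler_pM => //.
  - by rewrite mulr_ge0 // /del divr_ge0.
  - by rewrite mulr_ge0.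
have hR : 2 * ((n - B * (q * m))%N)%:R <= e' * nR.
  have hX : ((n - B * (q * m))%N)%:R <= (K.+1 ^ 2 * m)%:R :> R.
    rewrite ler_nat; apply: leq_trans (ltnW hrem) _; exact: leq_mul.
  have hNn' : N%:R <= nR by rewrite ler_nat.
  have h := hN; rewrite ltr_pdivrMr // in h.
  move: hX h hNn'; rewrite /e'; set X := (K.+1 ^ 2 * m)%:R; set Y := ((n - _)%N)%:R.
  move=> *; nra.
have h1 : \sum_(0 <= b < B) \sum_(0 <= j < q) (`|D b j| + m%:R * m%:R * del)
   <= \sum_(0 <= b < B) \sum_(0 <= j < q)
        ((2 * (e' * m%:R) + m%:R * m%:R * del + m%:R * CR) - G b j).
  apply: ler_sum => b _; apply: ler_sum => j _.
  have := hDabs b j; rewrite hDG; lra.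
apply: le_trans (lerD h1 (lexx _)) _.
rewrite (eq_bigr (fun b => \sum_(0 <= j < q)
     (2 * (e' * m%:R) + m%:R * m%:R * del + m%:R * CR) - \sum_(0 <= j < q) G b j)); last first.
  by move=> b _; rewrite sumrB.
rewrite sumrB !sumr_const_nat !subn0 -mulrnA mulnC.
rewrite -[(_ + _ + _) *+ (B * q)]mulr_natl !mulrDr.
move: hfn_dec hri hA hB2 hC hR.
set S1 := \sum_(0 <= b < B) _; set S2 := \sum_(_ <= t < n) _.
set a1 := (B * q)%:R * _; set a2 := (B * q)%:R * _; set a3 := (B * q)%:R * _.
rewrite /e' /nR.
exact: fin_arith.
Qed.
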